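(* Let $d\in\{2,3\}$, let $L,M,N$ be positive integers, $K:=dM+LN$. Let $\mathbf{A}\in\mathbb{R}^{dM\times dM}$, $\mathbf{C}\in\mathbb{R}^{LN\times LN}$ be symmetric positive definite, $\mathbf{B}\in\mathbb{R}^{dM\times LN}$ such that $\mathbf{E}=\begin{pmatrix}\mathbf{A}&\mathbf{B}\\ \mathbf{B}^\top&\mathbf{C}\end{pmatrix}$ is positive definite, $\mathbf{D}=\operatorname{diag}(D_1\mathbf{I}_{L\times L},\dots,D_N\mathbf{I}_{L\times L})$ with $D_i>0$, and $\mathbf{l}\in\mathbb{R}^{dM}$. Let $\mathbf{S}_i:\mathbb{R}^L\times\mathbb{R}^L\to\mathbb{R}^L$ ($i=1,\dots,N$) be semismooth, and define $\mathbf{F}(\mathbf{a},\mathbf{b},\mathbf{c})=(\mathbf{A}\mathbf{a}+\mathbf{B}\mathbf{b}+\mathbf{l},\ \mathbf{B}^\top\mathbf{a}+\mathbf{C}\mathbf{b}+\mathbf{D}\mathbf{c},\ \mathbf{S}_1(\mathbf{b}_1,\mathbf{c}_1),\dots,\mathbf{S}_N(\mathbf{b}_N,\mathbf{c}_N))$, where $\mathbf{b}_i=(b_{L(i-1)+1},\dots,b_{Li})^\top$ and $\mathbf{c}_i$ analogously. Let $(\mathbf{a}^*,\mathbf{b}^*,\mathbf{c}^* )$ be a solution of $\mathbf{F}(\mathbf{a}^*,\mathbf{b}^*,\mathbf{c}^* )=\mathbf{0}$, and let $\mathbf{H}\in\partial\mathbf{F}(\mathbf{a}^*,\mathbf{b}^*,\mathbf{c}^*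 )$, which has the form $\mathbf{H}=\begin{pmatrix}\mathbf{A}&\mathbf{B}&\mathbf{0}\\ \mathbf{B}^\top&\mathbf{C}&\mathbf{D}\\ \mathbf{0}&\mathbf{X}&\mathbf{Y}\end{pmatrix}$ with $\mathbf{X}=\operatorname{diag}(\mathbf{X}_1,\dots,\mathbf{X}_N)$, $\mathbf{Y}=\operatorname{diag}(\mathbf{Y}_1,\dots,\mathbf{Y}_N)$, $\mathbf{X}_i,\mathbf{Y}_i\in\mathbb{R}^{L\times L}$. Suppose the pair $(\mathbf{X}_i,\mathbf{Y}_i)$ is eigencomplementary for every $i\in\{1,\dots,N\}$. Then the Schur complement $\mathbf{S}_{\mathbf{H}}:=\mathbf{Y}-\mathbf{X}\mathbf{S}_{\mathbf{E}}^{-1}\mathbf{D}$ of $\mathbf{H}$ with respect to $\mathbf{E}$, where $\mathbf{S}_{\mathbf{E}}:=\mathbf{C}-\mathbf{B}^\top\mathbf{A}^{-1}\mathbf{B}$, is regular (invertible).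
   Context: Semismoothness is in the sense of Qi and Sun (1993). $\partial\mathbf{F}(\mathbf{x})$ denotes the Clarke subdifferential: the convex hull of all limits $\lim_n\nabla\mathbf{F}(\mathbf{x}_n)$ with $\mathbf{x}_n\to\mathbf{x}$ and $\mathbf{F}$ differentiable at each $\mathbf{x}_n$. A pair $(\mathbf{F},\mathbf{G})$ of real symmetric $L\times L$ matrices is called eigencomplementary if $\mathbf{F}$ is negative semi-definite, $\mathbf{G}$ is positive semi-definite, they have a common basis of eigenvectors of $\mathbb{R}^L$, and, if both are singular, additionally $\bigoplus_{\xi\in\sigma(\mathbf{F}),\,\xi<0}\operatorname{Eig}_{\mathbf{F}}(\xi)=\operatorname{Eig}_{\mathbf{G}}(0)$ ($\sigma$ = spectrum, $\operatorname{Eig}$ = eigenspace). *)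

(* Defs.v *)
From HB Require Import structures.
From mathcomp Require Import all_boot all_order all_algebra.
From mathcomp Require Import all_classical all_reals all_analysis.
Set Implicit Arguments. Unset Strict Implicit. Unset Printing Implicit Defensive.
Import Order.TTheory GRing.Theory Num.Theory.
Import numFieldNormedType.Exports.
Local Open Scope classical_set_scope.
Local Open Scope ring_scope.

Section Defs.
Variable R : realType.

Definition jacobian_at n m (G : 'cV[R]_n -> 'cV[R]_m) (x : 'cV[R]_n)
    (J : 'M[R]_(m, n)) : Prop :=
  differentiable G x /\ forall h : 'cV[R]_n, 'd G x h = J *m h.

Definition bouligand_sub n m (G : 'cV[R]_n -> 'cV[R]_m) (x : 'cV[R]_n) :
    set 'M[R]_(m, n) :=
  [set J | exists (xs : nat -> 'cV[R]_n) (Js : nat -> 'M[R]_(m, n)),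
      xs @ \oo --> x /\ (forall k, jacobian_at G (xs k) (Js k)) /\
      Js @ \oo --> J].

Definition conv_hull n m (S : set 'M[R]_(m, n)) : set 'M[R]_(m, n) :=
  [set H | exists (p : nat) (w : 'I_p -> R) (Js : 'I_p -> 'M[R]_(m, n)),
      (forall k, 0 <= w k) /\ \sum_(k < p) w k = 1 /\
      (forall k, S (Js k)) /\ H = \sum_(k < p) w k *: Js k].

Definition clarke n m (G : 'cV[R]_n -> 'cV[R]_m) (x : 'cV[R]_n) :=
  conv_hull (bouligand_sub G x).

Definition locally_lipschitz_at n m (G : 'cV[R]_n -> 'cV[R]_m) (x : 'cV[R]_n) :=
  exists (k : R) (del : R), 0 < del /\
    forall y z : 'cV[R]_n, `|y - x| < del -> `|z - x| < del ->
      `|G y - G z| <= k * `|y - z|.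

(* Semismoothness in the sense of Qi and Sun (1993): G is locally Lipschitz
   at x and for every h the limit of V h' over V in dG(x + t h'),
   h' -> h, t -> 0+ exists. *)
Definition semismooth_at n m (G : 'cV[R]_n -> 'cV[R]_m) (x : 'cV[R]_n) :=
  locally_lipschitz_at G x /\
  forall h : 'cV[R]_n, exists lim : 'cV[R]_m,
    forall e : R, 0 < e -> exists del : R, 0 < del /\
      forall (t : R) (h' : 'cV[R]_n) (V : 'M[R]_(m, n)),
        0 < t -> t < del -> `|h' - h| < del ->
        clarke G (x + t *: h') V -> `|V *m h' - lim| < e.

Definition semismooth n m (G : 'cV[R]_n -> 'cV[R]_m) :=
  forall x, semismooth_at G x.

Definition symmetricmx n (P : 'M[R]_n) := P^T = P.

Definition posdef n (P : 'M[R]_n) :=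
  symmetricmx P /\ forall v : 'cV[R]_n, v != 0 -> 0 < (v^T *m P *m v) 0 0.

Definition possemidef n (P : 'M[R]_n) :=
  forall v : 'cV[R]_n, 0 <= (v^T *m P *m v) 0 0.

Definition negsemidef n (P : 'M[R]_n) :=
  forall v : 'cV[R]_n, (v^T *m P *m v) 0 0 <= 0.

Definition eigencomplementary n (F G : 'M[R]_n) : Prop :=
  [/\ symmetricmx F /\ symmetricmx G, negsemidef F, possemidef G,
      (exists P : 'M[R]_n, P \in unitmx /\
         forall j, exists a b : R,
           F *m col j P = a *: col j P /\ G *m col j P = b *: col j P) &
      (* if both singular: sum of eigenspaces of F for negative eigenvalues
         equals the eigenspace (kernel) of G for eigenvalue 0 *)
      (F \notin unitmx -> G \notin unitmx ->
        forall v : 'cV[R]_n,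
          (G *m v = 0 *: v) <->
          exists (p : nat) (xi : 'I_p -> R) (vs : 'I_p -> 'cV[R]_n),
            (forall k, xi k < 0 /\ F *m vs k = xi k *: vs k) /\
            v = \sum_(k < p) vs k)].

(* block vectors / block-diagonal matrices with N blocks of size L;
   block i occupies indices mxvec_index i j = L*i + j, j < L *)
Definition blockv N L (b : 'cV[R]_(N * L)) (i : 'I_N) : 'cV[R]_L :=
  \col_j b (mxvec_index i j) 0.

Definition stackv N L (f : 'I_N -> 'cV[R]_L) : 'cV[R]_(N * L) :=
  (mxvec (\matrix_(i < N, j < L) f i j 0))^T.

Definition blkdiag N L (Xs : 'I_N -> 'M[R]_L) : 'M[R]_(N * L) :=
  \matrix_(p, q) \sum_(i < N) \sum_(j < L) \sum_(k < L)
     (if (p == mxvec_index i j) && (q == mxvec_index i k)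
      then Xs i j k else 0).

Definition Fmap dM N L (A : 'M[R]_dM) (B : 'M[R]_(dM, N * L))
    (C : 'M[R]_(N * L)) (D : 'M[R]_(N * L)) (l : 'cV[R]_dM)
    (S : 'I_N -> 'cV[R]_L -> 'cV[R]_L -> 'cV[R]_L)
    (z : 'cV[R]_(dM + (N * L + N * L))) : 'cV[R]_(dM + (N * L + N * L)) :=
  let a := usubmx z in
  let b := usubmx (dsubmx z) in
  let c := dsubmx (dsubmx z) in
  col_mx (A *m a + B *m b + l)
    (col_mx (B^T *m a + C *m b + D *m c)
            (stackv (fun i => S i (blockv b i) (blockv c i)))).

End Defs.

(* Main.v *)
Require Import Defs.
From HB Require Import structures.
From mathcomp Require Import all_boot all_order all_algebra.
From mathcomp Require Import all_classical all_reals all_analysis.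
From mathcomp Require Import ring.
Import Order.TTheory GRing.Theory Num.Theory.
Import numFieldNormedType.Exports.
Local Open Scope classical_set_scope.
Local Open Scope ring_scope.

Set Implicit Arguments. Unset Strict Implicit. Unset Printing Implicit Defensive.

Section Blk.
Variable R : realType.

Lemma mxvec_index_eq N L (i i' : 'I_N) (j j' : 'I_L) :
  (mxvec_index i j == mxvec_index i' j') = (i == i') && (j == j').
Proof.
have inj : injective (fun p : 'I_N * 'I_L => mxvec_index p.1 p.2).
  by move=> [a b] [a' b'] /= /cast_ord_inj /enum_rank_inj.
by rewrite (inj_eq inj (i, j) (i', j')) xpair_eqE.
Qed.

Lemma sum_mxvec N L (f : 'I_(N * L) -> R) :
  \sum_p f p = \sum_i \sum_j f (mxvec_index i j).
Proof.
rewrite pair_big /=.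
rewrite (reindex (fun p : 'I_N * 'I_L => mxvec_index p.1 p.2)) //=.
exists (fun k => enum_val (cast_ord (esym (mxvec_cast N L)) k)) => [[i j] _ | k _] /=.
  by rewrite /mxvec_index cast_ordK enum_rankK.
by case/mxvec_indexP: k => i j /=; rewrite /mxvec_index cast_ordK enum_rankK.
Qed.

Lemma blkdiagE N L (F : 'I_N -> 'M[R]_L) i j i' k :
  blkdiag F (mxvec_index i j) (mxvec_index i' k) = if i == i' then F i j k else 0.
Proof.
rewrite mxE (bigD1 i) //= [X in _ + X]big1 ?addr0; last first.
  move=> i0 ni0; have ni : (i == i0) = false by rewrite eq_sym (negbTE ni0).
  apply: big1 => j0 _; apply: big1 => k0 _.
  by rewrite !mxvec_index_eq ni.
rewrite (bigD1 j) //= [X in _ + X]big1 ?addr0; last first.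
  move=> j0 nj0; have nj : (j == j0) = false by rewrite eq_sym (negbTE nj0).
  apply: big1 => k0 _.
  by rewrite !mxvec_index_eq nj !andbF.
rewrite (bigD1 k) //= [X in _ + X]big1 ?addr0; last first.
  move=> k0 nk0; have nk : (k == k0) = false by rewrite eq_sym (negbTE nk0).
  by rewrite !mxvec_index_eq nk andbF andbF.
by rewrite !mxvec_index_eq !eqxx /= !andbT eq_sym.
Qed.

Lemma blkdiag_ext N L (M1 M2 : 'M[R]_(N * L)) :
  (forall i j i' k, M1 (mxvec_index i j) (mxvec_index i' k) =
                    M2 (mxvec_index i j) (mxvec_index i' k)) -> M1 = M2.
Proof.
by move=> h; apply/matrixP => p q; case/mxvec_indexP: p => i j;
  case/mxvec_indexP: q => i' k; apply: h.
Qed.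
Lemma blkdiag_mul N L (F G : 'I_N -> 'M[R]_L) :
  blkdiag F *m blkdiag G = blkdiag (fun i => F i *m G i).
Proof.
apply: blkdiag_ext => i j i' k.
rewrite blkdiagE mxE sum_mxvec (bigD1 i) //= [X in _ + X]big1 ?addr0; last first.
  move=> i0 ni0; have ni : (i == i0) = false by rewrite eq_sym (negbTE ni0).
  by apply: big1 => j0 _; rewrite blkdiagE ni mul0r.
have [<-|ne] := eqVneq i i'; rewrite ?eqxx ?mxE.
  by apply: eq_bigr => j0 _; rewrite !blkdiagE eqxx.
by apply: big1 => j0 _; rewrite !blkdiagE eqxx (negbTE ne) mulr0.
Qed.

Lemma blkdiag_tr N L (F : 'I_N -> 'M[R]_L) :
  (blkdiag F)^T = blkdiag (fun i => (F i)^T).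
Proof.
apply: blkdiag_ext => i j i' k.
rewrite mxE !blkdiagE eq_sym; have [->|ne] := eqVneq i' i; by rewrite ?mxE.
Qed.

Lemma blkdiag_diag N L (f : 'I_N -> 'I_L -> R) :
  blkdiag (fun i => diag_mx (\row_j f i j)) = diag_mx (mxvec (\matrix_(i, j) f i j)).
Proof.
apply: blkdiag_ext => i j i' k.
rewrite blkdiagE !mxE mxvec_index_eq mxvecE mxE.
by case: (i == i') => //=; rewrite mulr0n.
Qed.

Lemma blkdiag1 N L : blkdiag (fun _ : 'I_N => 1%:M : 'M[R]_L) = 1%:M.
Proof.
apply: blkdiag_ext => i j i' k.
rewrite blkdiagE !mxE mxvec_index_eq.
by case: (i == i') => //=; rewrite mxE ?mulr0n.
Qed.
End Blk.

Section Core.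
Variable R : realType.

Lemma dotE n (x : 'cV[R]_n) : (x^T *m x) 0 0 = \sum_i x i 0 ^+ 2.
Proof. by rewrite mxE; apply: eq_bigr => i _; rewrite mxE expr2. Qed.

Lemma dot_ge0 n (x : 'cV[R]_n) : 0 <= (x^T *m x) 0 0.
Proof. by rewrite dotE sumr_ge0 // => i _; rewrite sqr_ge0. Qed.

Lemma dot_eq0 n (x : 'cV[R]_n) : (x^T *m x) 0 0 = 0 -> x = 0.
Proof.
rewrite dotE => /eqP; rewrite psumr_eq0 => [/allP h|i _]; last by rewrite sqr_ge0.
apply/matrixP => i j; rewrite (ord1 j) mxE.
by have := h i (mem_index_enum _); rewrite sqrf_eq0 => /eqP.
Qed.

Lemma unit_ker n (M : 'M[R]_n) :
  (forall v : 'cV[R]_n, M *m v = 0 -> v = 0) -> M \in unitmx.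
Proof.
move=> h; rewrite -unitmx_tr -row_free_unit -kermx_eq0.
apply/eqP/row_matrixP => i; rewrite row0.
have: (row i (kermx M^T) *m M^T = 0).
  by apply/sub_kermxP; rewrite row_sub.
move=> /(congr1 trmx); rewrite trmx_mul trmxK trmx0 => /h /(congr1 trmx).
by rewrite trmxK trmx0.
Qed.

Lemma qformE n (x y : 'cV[R]_n) (G : 'M[R]_n) :
  (x^T *m G *m y) 0 0 = \sum_j \sum_k x j 0 * G j k * y k 0.
Proof.
rewrite mxE exchange_big; apply: eq_bigr => k _; rewrite mxE mulr_suml.
by apply: eq_bigr => j _; rewrite mxE.
Qed.

Lemma diag_comm_entry n (G : 'M[R]_n) (a : 'rV[R]_n) j k :
  G *m diag_mx a = diag_mx a *m G -> G j k != 0 -> a 0 j = a 0 k.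
Proof.
move=> /matrixP /(_ j k) e nz; rewrite mul_mx_diag mul_diag_mx !mxE [RHS]mulrC in e.
by apply: (mulfI nz); rewrite e.
Qed.

Lemma core n (Q X Y D P : 'M[R]_n) (a b d : 'rV[R]_n) :
  Q \in unitmx ->
  X *m Q = Q *m diag_mx a -> Q^T *m X = diag_mx a *m Q^T ->
  Y *m Q = Q *m diag_mx b -> Q^T *m Y = diag_mx b *m Q^T ->
  D *m Q = Q *m diag_mx d -> Q^T *m D = diag_mx d *m Q^T ->
  (forall k, a 0 k <= 0) -> (forall k, 0 <= b 0 k) -> (forall k, 0 < d 0 k) ->
  (forall k, a 0 k < 0 \/ 0 < b 0 k) ->
  posdef P -> Y - X *m P *m D \in unitmx.
Proof.
move=> Qu XQ QX YQ QY DQ QD ale0 bge0 dgt0 ab [Psym Ppos].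
set G := Q^T *m Q.
have Gcomm : forall (M : 'M[R]_n) e, M *m Q = Q *m diag_mx e ->
    Q^T *m M = diag_mx e *m Q^T -> G *m diag_mx e = diag_mx e *m G.
  by move=> M e MQ QM; rewrite /G -mulmxA -MQ mulmxA QM mulmxA.
have Geq : forall j k, G j k != 0 -> [/\ a 0 j = a 0 k, b 0 j = b 0 k & d 0 j = d 0 k].
  move=> j k nz; split; [exact: (diag_comm_entry (Gcomm _ _ XQ QX) nz)|exact: (diag_comm_entry (Gcomm _ _ YQ QY) nz)|exact: (diag_comm_entry (Gcomm _ _ DQ QD) nz)].
apply: unit_ker => v Hv.
set u := D *m v; set w := P *m u.
have eq1 : Y *m v = X *m w.
  apply/eqP; rewrite -subr_eq0; apply/eqP; rewrite -Hv mulmxBl /w /u !mulmxA //.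
set gam := Q^T *m v; set al := Q^T *m u; set be := Q^T *m w.
have hal : forall k, al k 0 = d 0 k * gam k 0.
  by move=> k; rewrite /al /u mulmxA QD -mulmxA mul_diag_mx mxE.
have hbg : forall k, b 0 k * gam k 0 = a 0 k * be k 0.
  move=> k; have := congr1 (fun M : 'cV[R]_n => M k 0) (congr1 (mulmx Q^T) eq1).
  by rewrite /= !mulmxA QY QX -!mulmxA !mul_diag_mx !mxE.
set c := invmx Q *m u.
have hu : u = Q *m c by rewrite /c mulmxA mulmxV // mul1mx.
have halG : forall k, al k 0 = \sum_j G k j * c j 0.
  by move=> k; rewrite /al hu mulmxA mxE.
have c0 : forall k, a 0 k = 0 -> c k 0 = 0.
  set c' := \col_k (if a 0 k == 0 then c k 0 else 0).
  have Qc0 : Q *m c' = 0.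
    apply: dot_eq0; rewrite trmx_mul mulmxA -(mulmxA _ Q^T) -/G qformE.
    apply: big1 => j _.
    transitivity (c' j 0 * al j 0).
      rewrite halG mulr_sumr; apply: eq_bigr => k _.
      have [->|nz] := eqVneq (G j k) 0; first by rewrite !(mulr0, mul0r).
      have [e _ _] := Geq j k nz.
      rewrite /c' !mxE -e; case: (a 0 j == 0); by rewrite ?mulrA ?mul0r.
    rewrite /c' mxE; have [a0|] := eqVneq (a 0 j) 0; last by rewrite mul0r.
    have bk : 0 < b 0 j by case: (ab j) => //; rewrite a0 ltxx.
    have := hbg j; rewrite a0 mul0r => /eqP; rewrite mulf_eq0 (gt_eqF bk) /= => /eqP g0.
    by rewrite hal g0 !mulr0.
  move=> k a0; have c'0 : c' = 0 by rewrite -(mulKmx Qu c') Qc0 mulmx0.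
  by have := congr1 (fun M : 'cV[R]_n => M k 0) c'0; rewrite /= /c' !mxE a0 eqxx.
have uPu : (u^T *m P *m u) 0 0 <= 0.
  have -> : (u^T *m P *m u) 0 0 = \sum_k c k 0 * be k 0.
    rewrite -mulmxA -/w {1}hu trmx_mul -mulmxA -/be mxE.
    by apply: eq_bigr => k _; rewrite mxE.
  set r := fun k => b 0 k / d 0 k / a 0 k.
  have rle : forall k, 0 <= - r k.
    move=> k; rewrite /r -mulrN; apply: mulr_ge0; first by rewrite divr_ge0 // ltW.
    by rewrite oppr_ge0 invr_le0.
  set t := fun k => Num.sqrt (- r k).
  set e := \col_k (t k * c k 0).
  have -> : \sum_k c k 0 * be k 0 = - ((Q *m e)^T *m (Q *m e)) 0 0.
    rewrite trmx_mul mulmxA -(mulmxA _ Q^T) -/G qformE -sumrN; apply: eq_bigr => k _.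
    transitivity (c k 0 * r k * al k 0).
      have [a0|an0] := eqVneq (a 0 k) 0; first by rewrite c0 // !mul0r.
      have dn0 : d 0 k != 0 by rewrite gt_eqF.
      rewrite hal /r -mulrA; congr (_ * _); apply: (mulfI an0); rewrite -hbg.
      by field; rewrite an0 dn0.
    rewrite halG mulr_sumr -sumrN; apply: eq_bigr => j _.
    have [->|nz] := eqVneq (G k j) 0; first by rewrite !(mulr0, mul0r) oppr0.
    have [ea eb ed] := Geq k j nz.
    have tj : t j = t k by rewrite /t /r ea eb ed.
    have tt : t k * t k = - r k by rewrite -expr2 sqr_sqrtr.
    have tt' : r k = - (t k * t k) by rewrite tt opprK.
    rewrite /e !mxE tj tt'; ring.
  by rewrite oppr_le0 dot_ge0.
have u0 : u = 0.
  by have [//|nz] := eqVneq u 0; have := Ppos u nz; rewrite ltNge uPu.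
have g0 : gam = 0.
  apply/matrixP => k j; rewrite (ord1 j); have := hal k.
  rewrite /al u0 mulmx0 mxE => /esym /eqP; rewrite mulf_eq0 (gt_eqF (dgt0 k)) /=.
  by move=> /eqP ->.
have Qtu : Q^T \in unitmx by rewrite unitmx_tr.
have e := mulKmx Qtu v; rewrite -/gam g0 mulmx0 in e.
by rewrite -e.
Qed.

End Core.

Section Main.
Variable R : realType.

Lemma col_mulmx m n p (A : 'M[R]_(m, n)) (B : 'M[R]_(n, p)) j :
  col j (A *m B) = A *m col j B.
Proof. by rewrite !colE mulmxA. Qed.

Lemma posdef_unit n (M : 'M[R]_n) : posdef M -> M \in unitmx.
Proof.
move=> [_ pos]; apply: unit_ker => v Mv.
have [//|nz] := eqVneq v 0; have := pos v nz.
by rewrite -mulmxA Mv mulmx0 mxE ltxx.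
Qed.

Lemma schur_posdef m n (A : 'M[R]_m) (B : 'M[R]_(m, n)) (C : 'M[R]_n) :
  posdef A -> posdef (block_mx A B B^T C) ->
  posdef (C - B^T *m invmx A *m B).
Proof.
move=> hA [Esym Epos]; have Au := posdef_unit hA.
have Asym : A^T = A by case: hA.
have Csym : C^T = C.
  have := congr1 drsubmx Esym; rewrite tr_block_mx block_mxKdr => ->.
  by rewrite block_mxKdr.
split.
  by rewrite /Defs.symmetricmx raddfB /= Csym !trmx_mul trmxK trmx_inv Asym mulmxA.
move=> z nz; set y := col_mx (- (invmx A *m B *m z)) z.
have ynz : y != 0.
  by apply: contra nz => /eqP y0; rewrite -(col_mxKd (- (invmx A *m B *m z)) z) -/y y0 linear0.
have := Epos y ynz; rewrite -mulmxA mul_block_col /y tr_col_mx mul_row_col.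
rewrite !mulmxN !mulmxA mulmxV // mul1mx addNr mulmx0 add0r.
by move=> h; rewrite -mulmxA mulmxBl addrC.
Qed.

Lemma inv_posdef n (S : 'M[R]_n) : posdef S -> posdef (invmx S).
Proof.
move=> hS; have Su := posdef_unit hS; case: hS => Ssym Spos.
split; first by rewrite /Defs.symmetricmx trmx_inv Ssym.
move=> v nz; set z := invmx S *m v.
have hv : v = S *m z by rewrite /z mulKVmx.
have znz : z != 0 by apply: contra nz => /eqP z0; rewrite hv z0 mulmx0.
have := Spos z znz.
by move=> h; rewrite -mulmxA -/z {1}hv trmx_mul Ssym.
Qed.

Lemma ec_block L (Fm Gm Pm : 'M[R]_L) (ea eb : 'I_L -> R) :
  eigencomplementary Fm Gm -> Pm \in unitmx ->
  (forall j, Fm *m col j Pm = ea j *: col j Pm /\ Gm *m col j Pm = eb j *: col j Pm) ->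
  forall j, [/\ ea j <= 0, 0 <= eb j & (ea j < 0 \/ 0 < eb j)].
Proof.
move=> [[Fs Gs] Fn Gp _ cond] Pu eig j.
set v := col j Pm.
have vnz : v != 0.
  apply/negP => /eqP v0.
  have := congr1 (fun M : 'cV[R]_L => M j 0) (congr1 (col j) (mulVmx Pu)).
  by rewrite /= col_mulmx -/v v0 mulmx0 !mxE eqxx => /eqP; rewrite eq_sym oner_eq0.
have dpos : 0 < (v^T *m v) 0 0.
  by rewrite lt0r dot_ge0 andbT; apply: contra vnz => /eqP/dot_eq0 ->.
have qF : (v^T *m Fm *m v) 0 0 = ea j * (v^T *m v) 0 0.
  by rewrite -mulmxA (eig j).1 -scalemxAr mxE.
have qG : (v^T *m Gm *m v) 0 0 = eb j * (v^T *m v) 0 0.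
  by rewrite -mulmxA (eig j).2 -scalemxAr mxE.
have ale : ea j <= 0 by have := Fn v; rewrite qF pmulr_lle0.
have bge : 0 <= eb j by have := Gp v; rewrite qG pmulr_lge0.
split => //.
have [alt|a0] := ltP (ea j) 0; first by left.
have ea0 : ea j = 0 by apply/le_anti; rewrite ale a0.
have [blt|b0] := ltP 0 (eb j); first by right.
have eb0 : eb j = 0 by apply/le_anti; rewrite bge b0.
exfalso.
have Fv0 : Fm *m v = 0 by rewrite (eig j).1 ea0 scale0r.
have Gv0 : Gm *m v = 0 by rewrite (eig j).2 eb0 scale0r.
have Fnu : Fm \notin unitmx.
  apply/negP => Fu; have := mulKmx Fu v; rewrite Fv0 mulmx0 => /esym/eqP.
  by rewrite (negbTE vnz).
have Gnu : Gm \notin unitmx.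
  apply/negP => Gu; have := mulKmx Gu v; rewrite Gv0 mulmx0 => /esym/eqP.
  by rewrite (negbTE vnz).
have Gv0' : Gm *m v = 0 *: v by rewrite Gv0 scale0r.
have [p [xi [vs [hvs vsum]]]] := (cond Fnu Gnu v).1 Gv0'.
have vv : v^T *m v = 0.
  have -> : v^T *m v = v^T *m \sum_(k < p) vs k by rewrite -vsum.
  rewrite mulmx_sumr big1 // => k _.
  have [xlt Fk] := hvs k.
  have : xi k *: (v^T *m vs k) = 0.
    rewrite scalemxAr -Fk mulmxA -[v^T *m Fm]trmxK trmx_mul trmxK Fs Fv0.
    by rewrite trmx0 mul0mx.
  by move/eqP; rewrite scalemx_eq0 (lt_eqF xlt) /= => /eqP.
by move: vnz; rewrite (dot_eq0 (_ : (v^T *m v) 0 0 = 0)) ?eqxx // vv mxE.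
Qed.

End Main.

Lemma sym_trans {R : realType} {n} {M Q : 'M[R]_n} {e : 'rV[R]_n} :
  M^T = M -> M *m Q = Q *m diag_mx e -> Q^T *m M = diag_mx e *m Q^T.
Proof. by move=> MT MQ; rewrite -{1}MT -trmx_mul MQ trmx_mul tr_diag_mx. Qed.

Unset Implicit Arguments. Set Strict Implicit. Set Printing Implicit Defensive.

Theorem lemma3p1 (R : realType) (d L M N : nat)
  (hd : (d == 2%N) || (d == 3%N)) (hL : (0 < L)%N) (hM : (0 < M)%N) (hN : (0 < N)%N)
  (A : 'M[R]_(d * M)) (B : 'M[R]_(d * M, N * L)) (C : 'M[R]_(N * L))
  (hA : posdef A) (hC : posdef C) (hE : posdef (block_mx A B B^T C))
  (Dv : 'I_N -> R) (hD : forall i, 0 < Dv i)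
  (l : 'cV[R]_(d * M))
  (S : 'I_N -> 'cV[R]_L -> 'cV[R]_L -> 'cV[R]_L)
  (hS : forall i, semismooth (fun w : 'cV[R]_(L + L) => S i (usubmx w) (dsubmx w)))
  (a : 'cV[R]_(d * M)) (b c : 'cV[R]_(N * L))
  (hsol : Fmap A B C (blkdiag (fun i => (Dv i)%:M)) l S (col_mx a (col_mx b c)) = 0)
  (Xs Ys : 'I_N -> 'M[R]_L)
  (H : 'M[R]_(d * M + (N * L + N * L)))
  (hHform : H = block_mx A (row_mx B 0) (col_mx B^T 0)
                  (block_mx C (blkdiag (fun i => (Dv i)%:M)) (blkdiag Xs) (blkdiag Ys)))
  (hH : clarke (Fmap A B C (blkdiag (fun i => (Dv i)%:M)) l S) (col_mx a (col_mx b c)) H)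
  (hEC : forall i, eigencomplementary (Xs i) (Ys i)) :
  let SE := C - B^T *m invmx A *m B in
  blkdiag Ys - blkdiag Xs *m invmx SE *m blkdiag (fun i => (Dv i)%:M) \in unitmx.
Proof.
cbv zeta; set SE := C - B^T *m invmx A *m B.
have Ppd : posdef (invmx SE) by apply: inv_posdef; apply: schur_posdef.
have h1 : forall i, exists Pi : 'M[R]_L, Pi \in unitmx /\ forall j, exists ab : R * R,
   Xs i *m col j Pi = ab.1 *: col j Pi /\ Ys i *m col j Pi = ab.2 *: col j Pi.
  move=> i; have [_ _ _ [Pi [Pu hP]] _] := hEC i; exists Pi; split => // j.
  by have [x [y [e1 e2]]] := hP j; exists (x, y).
have [Ps hPs] := boolp.choice h1.
have h2 : forall i, exists f : 'I_L -> R * R, forall j,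
    Xs i *m col j (Ps i) = (f j).1 *: col j (Ps i) /\
    Ys i *m col j (Ps i) = (f j).2 *: col j (Ps i).
  by move=> i; have [f hf] := boolp.choice (hPs i).2; exists f.
have [ab hab] := boolp.choice h2.
have hsign := fun i => ec_block (hEC i) (hPs i).1 (hab i).
have XP : forall i, Xs i *m Ps i = Ps i *m diag_mx (\row_j (ab i j).1).
  move=> i; apply/matrixP => p q.
  have := congr1 (fun M : 'cV[R]_L => M p 0) ((hab i q).1).
  by rewrite mul_mx_diag /= -col_mulmx !mxE => ->; rewrite mulrC.
have YP : forall i, Ys i *m Ps i = Ps i *m diag_mx (\row_j (ab i j).2).
  move=> i; apply/matrixP => p q.
  have := congr1 (fun M : 'cV[R]_L => M p 0) ((hab i q).2).
  by rewrite mul_mx_diag /= -col_mulmx !mxE => ->; rewrite mulrC.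
have DP : forall i, (Dv i)%:M *m Ps i = Ps i *m diag_mx (\row_j (fun _ : 'I_L => Dv i) j).
  move=> i; rewrite mul_scalar_mx mul_mx_diag; apply/matrixP => p q.
  by rewrite !mxE mulrC.
set Q := blkdiag Ps.
have Qu : Q \in unitmx.
  have : blkdiag (fun i => invmx (Ps i)) *m Q = 1%:M.
    rewrite blkdiag_mul -(blkdiag1 R N L); congr blkdiag.
    by apply: boolp.funext => i; rewrite mulVmx // (hPs i).1.
  by case/mulmx1_unit.
have XQ : blkdiag Xs *m Q = Q *m diag_mx (mxvec (\matrix_(i, j) (ab i j).1)).
  rewrite -blkdiag_diag !blkdiag_mul; congr blkdiag.
  by apply: boolp.funext => i; exact: XP.
have YQ : blkdiag Ys *m Q = Q *m diag_mx (mxvec (\matrix_(i, j) (ab i j).2)).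
  rewrite -blkdiag_diag !blkdiag_mul; congr blkdiag.
  by apply: boolp.funext => i; exact: YP.
have DQ : blkdiag (fun i => (Dv i)%:M) *m Q =
    Q *m diag_mx (mxvec (\matrix_(i, j) (fun (i : 'I_N) (_ : 'I_L) => Dv i) i j)).
  rewrite -blkdiag_diag !blkdiag_mul; congr blkdiag.
  by apply: boolp.funext => i; exact: DP.
have Xsym : (blkdiag Xs)^T = blkdiag Xs.
   rewrite blkdiag_tr; congr blkdiag; apply: boolp.funext => i.
  by have [[Fs _] _ _ _ _] := hEC i.
have Ysym : (blkdiag Ys)^T = blkdiag Ys.
  rewrite (blkdiag_tr Ys); congr blkdiag; apply: boolp.funext => i.
  by have [[_ Gs] _ _ _ _] := hEC i.
have Dsym : (blkdiag (fun i => (Dv i)%:M : 'M[R]_L))^T = blkdiag (fun i => (Dv i)%:M : 'M[R]_L).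
  etransitivity; first exact: blkdiag_tr. congr blkdiag; apply: boolp.funext => i.
  by rewrite tr_scalar_mx.
apply: (core Qu XQ (sym_trans Xsym XQ) YQ (sym_trans Ysym YQ) DQ (sym_trans Dsym DQ))
  => //.
- by move=> k; case/mxvec_indexP: k => i j; rewrite mxvecE mxE; case: (hsign i j).
- by move=> k; case/mxvec_indexP: k => i j; rewrite mxvecE mxE; case: (hsign i j).
- by move=> k; case/mxvec_indexP: k => i j; rewrite mxvecE mxE.
- by move=> k; case/mxvec_indexP: k => i j; rewrite !mxvecE !mxE; case: (hsign i j).
Qed.
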